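(* Let $A$ be a complex $r$-matrix of order $n_1\times\cdots\times n_r$, with slices $A^{(j)}_t$. Then \[ \|A\|_r^r\leq\min_{k\in[r]}\ \max_{s\in[n_k]}\ \sum\Big\{|a_{i_1,\ldots,i_r}|\prod_{j\in[r]\setminus\{k\}}|A^{(j)}_{i_j}|_1 \ :\ i_k=s,\ i_j\in[n_j]\text{ for }j\neq k\Big\}. \]
   Context: An $r$-matrix of order $n_1\times\cdots\times n_r$ is a function on $[n_1]\times\cdots\times[n_r]$ with values $a_{i_1,\ldots,i_r}$. For $j\in[r]$ and $t\in[n_j]$, the slice $A^{(j)}_t$ is the $(r-1)$-matrix obtained by fixing $i_j=t$, and $|A^{(j)}_t|_1$ is the sum of the absolute values of its entries. The spectral $r$-norm is $\|A\|_r=\max\{|\sum a_{i_1,\ldots,i_r}\overline{x^{(1)}_{i_1}}\cdots\overline{x^{(r)}_{i_r}}|:\mathbf{x}^{(k)}\in\mathbb{C}^{n_k},\ |\mathbf{x}^{(k)}|_r=1\ \forall k\}$. *)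

(* Defs.v *)
From HB Require Import structures.
From mathcomp Require Import all_boot all_order all_algebra.
From mathcomp Require Import all_classical all_reals.
From mathcomp Require Import complex.
Set Implicit Arguments. Unset Strict Implicit. Unset Printing Implicit Defensive.
Import Order.TTheory GRing.Theory Num.Theory.
Local Open Scope ring_scope.
Local Open Scope classical_set_scope.

(* Multi-indices (i_1,...,i_r) with i_j in [n_j] (0-based: 'I_(n j)). *)
Definition midx (r : nat) (n : 'I_r -> nat) : finType :=
  {dffun forall j : 'I_r, 'I_(n j)}.

Definition rmatrix (R : realType) (r : nat) (n : 'I_r -> nat) :=
  midx n -> R[i].

(* |x|_r^r = sum_i |x_i|^r ; |x|_r = 1 iff this sum is 1. *)
Definition lrpow (R : realType) (r m : nat) (x : 'I_m -> R[i]) : R :=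
  \sum_(i < m) ComplexField.Normc.normc (x i) ^+ r.

Definition rform (R : realType) (r : nat) (n : 'I_r -> nat) (A : rmatrix R n)
  (x : forall k : 'I_r, 'I_(n k) -> R[i]) : R[i] :=
  \sum_(i : midx n) A i * \prod_(k < r) conjc (x k (i k)).

(* Spectral r-norm: max of |form| over all x^(k) with |x^(k)|_r = 1.
   The maximum is attained (compact unit spheres), so it equals the supremum. *)
Definition spec_norm (R : realType) (r : nat) (n : 'I_r -> nat)
  (A : rmatrix R n) : R :=
  sup [set ComplexField.Normc.normc (rform A x) | x in
         [set x : forall k : 'I_r, 'I_(n k) -> R[i] | forall k, lrpow r (x k) = 1]].

Definition slice_norm1 (R : realType) (r : nat) (n : 'I_r -> nat)
  (A : rmatrix R n) (j : 'I_r) (t : 'I_(n j)) : R :=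
  \sum_(i : midx n | i j == t) ComplexField.Normc.normc (A i).

Definition bound_ks (R : realType) (r : nat) (n : 'I_r -> nat)
  (A : rmatrix R n) (k : 'I_r) (s : 'I_(n k)) : R :=
  \sum_(i : midx n | i k == s)
     ComplexField.Normc.normc (A i) * \prod_(j < r | j != k) slice_norm1 A (i j).

(* max_{s in [n_k]} (values are nonnegative, and n_k >= 1, so 0 is a
   harmless neutral element). *)
Definition max_s (R : realType) (r : nat) (n : 'I_r -> nat)
  (A : rmatrix R n) (k : 'I_r) : R :=
  \big[Num.max/0]_(s < n k) bound_ks A s.

(* min over k in [r], of a nonnegative family, for r >= 1:
   the neutral element is the max of the family, which is one of its values,
   so this is exactly the minimum. *)
Definition min_ord (R : realType) (r : nat) (F : 'I_r -> R) : R :=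
  \big[Num.min/ \big[Num.max/0]_(k < r) F k]_(k < r) F k.

(* Main.v *)
Require Import Defs.
From HB Require Import structures.
From mathcomp Require Import all_boot all_order all_algebra.
From mathcomp Require Import all_classical all_reals.
From mathcomp Require Import complex.
From mathcomp Require Import ring lra.
From mathcomp Require Import exp.
Import classical_sets.
Import Order.TTheory GRing.Theory Num.Theory.
Local Open Scope ring_scope.

Set Implicit Arguments. Unset Strict Implicit. Unset Printing Implicit Defensive.
Local Notation nc := ComplexField.Normc.normc.

Lemma nc_ge0 (R : realType) (z : R[i]) : 0 <= nc z.
Proof. by case: z => a b; rewrite /= sqrtr_ge0. Qed.

Lemma nc_conj (R : realType) (z : R[i]) : nc (conjc z) = nc z.
Proof. by case: z => a b; rewrite /= sqrrN. Qed.

Lemma nc_prod (R : realType) (I : finType) (F : I -> R[i]) :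
  nc (\prod_i F i) = \prod_i nc (F i).
Proof.
apply: (big_morph (fun z : R[i] => nc z)).
- by move=> x y; exact: ComplexField.Normc.normcM.
- exact: ComplexField.Normc.normc1.
Qed.

Lemma nc_sum (R : realType) (I : finType) (F : I -> R[i]) :
  nc (\sum_i F i) <= \sum_i nc (F i).
Proof.
apply: (big_ind2 (fun (z : R[i]) (v : R) => nc z <= v)).
- by rewrite ComplexField.Normc.normc0.
- move=> x1 x2 y1 y2 h1 h2; apply: le_trans (le_normcD _ _) _.
  exact: lerD.
- by [].
Qed.

Lemma prod_constE (R : realType) (r : nat) (c : R) : \prod_(j < r) c = c ^+ r.
Proof. by rewrite prodr_const card_ord. Qed.

Lemma amgm (R : realType) (r : nat) (hr : (0 < r)%N) (E : 'I_r -> R) (z : R) :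
 (forall j, 0 <= E j) -> 0 <= z -> z ^+ r = \prod_j E j -> r%:R * z <= \sum_j E j.
Proof.
move=> E0 z0 hz.
have := leif_AGM (A := predT) (E := E) (fun i _ => E0 i).
move=> H.
have H' : \prod_j E j <= ((\sum_j E j) / r%:R) ^+ r.
  move: H; rewrite cardT size_enum_ord.
  have e1 : \prod_(i in predT) E i = \prod_j E j by apply: eq_bigl.
  have e2 : \sum_(i in predT) E i = \sum_j E j by apply: eq_bigl.
  by rewrite e1 e2 => -[].
have sE0 : 0 <= \sum_j E j by apply: sumr_ge0.
have r0 : (0 : R) < r%:R by rewrite ltr0n.
rewrite -(ler_pXn2r hr) ?nnegrE ?mulr_ge0 ?ler0n //.
rewrite exprMn hz.
have -> : \sum_j E j = r%:R * ((\sum_j E j) / r%:R).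
  by rewrite mulrCA divff ?mulr1 // gt_eqF.
rewrite [X in _ <= X]exprMn; apply: ler_wpM2l => //.
by rewrite exprn_ge0 // ler0n.
Qed.

Section Core.
Variables (R : realType) (r : nat) (n : 'I_r -> nat).
Hypothesis hr : (0 < r)%N.
Variable A : rmatrix R n.

Local Notation a i := (nc (A i)).
Local Notation S j t := (@slice_norm1 R r n A j t).

Lemma S_ge0 j t : 0 <= S j t.
Proof. by apply: sumr_ge0 => i _; exact: nc_ge0. Qed.

Lemma a_le_S (i : midx n) j : a i <= S j (i j).
Proof.
rewrite /slice_norm1 (bigD1 i) //= lerDl.
by apply: sumr_ge0 => ? _; exact: nc_ge0.
Qed.

Lemma max_s_ge0 k : 0 <= max_s A k.
Proof.
rewrite /max_s; apply: (big_ind (fun v => 0 <= v)) => //.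
- by move=> x y hx hy; rewrite le_max hx.
- move=> s _; apply: sumr_ge0 => i _; apply: mulr_ge0; first exact: nc_ge0.
  by apply: prodr_ge0 => j _; exact: S_ge0.
Qed.

Lemma max_s_ub k (s : 'I_(n k)) : bound_ks A s <= max_s A k.
Proof.
by rewrite /max_s (bigD1 s) //= le_max lexx.
Qed.

End Core.

Section Core2.
Local Unset Implicit Arguments.
Variables (R : realType) (r : nat) (n : 'I_r -> nat).
Hypothesis hr : (0 < r)%N.
Variable A : rmatrix R n.
Local Notation a i := (nc (A i)).
Local Notation S j t := (@slice_norm1 R r n A j t).

Variable y : forall j, 'I_(n j) -> R.
Hypothesis y0 : forall j t, 0 <= y j t.
Hypothesis y1 : forall j, \sum_t y j t ^+ r = 1.
Variable k : 'I_r.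
Let B := \sum_(i : midx n) a i * \prod_j y j (i j).
Let P (i : midx n) := \prod_(l < r | l != k) S l (i l).

Lemma B_ge0 : 0 <= B.
Proof.
apply: sumr_ge0 => i _; apply: mulr_ge0; first exact: nc_ge0.
by apply: prodr_ge0 => j _.
Qed.

Hypothesis Bpos : 0 < B.

Let W (j : 'I_r) (i : midx n) : R :=
  if j == k then P i / B ^+ r.-1 else B / S j (i j).

Lemma W_ge0 j i : 0 <= W j i.
Proof.
rewrite /W; case: eqP => _; apply: divr_ge0.
all: first [exact: S_ge0 | exact: B_ge0 | by rewrite exprn_ge0 // B_ge0
           | by apply: prodr_ge0 => l _; exact: S_ge0].
Qed.

Lemma step1 (i : midx n) :
  r%:R * (a i * \prod_j y j (i j)) <= \sum_j a i * W j i * y j (i j) ^+ r.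
Proof.
have Esum0 : 0 <= \sum_j a i * W j i * y j (i j) ^+ r.
  apply: sumr_ge0 => j _; rewrite mulr_ge0 ?exprn_ge0 ?mulr_ge0 ?W_ge0 //.
  exact: nc_ge0.
have [a0|anz] := eqVneq (a i) 0; first by rewrite [in X in X <= _]a0 mul0r mulr0.
have apos : 0 < a i by rewrite lt_def anz nc_ge0.
have Spos : forall l, 0 < S l (i l) by move=> l; exact: lt_le_trans apos (a_le_S A i l).
apply: amgm => //.
- move=> j; rewrite mulr_ge0 ?exprn_ge0 ?mulr_ge0 ?W_ge0 //; exact: nc_ge0.
- by rewrite mulr_ge0 ?nc_ge0 // prodr_ge0.
rewrite big_split /= big_split /= prod_constE exprMn.
rewrite -prodrXl.
suff -> : \prod_j W j i = 1 by rewrite mulr1.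
rewrite (bigD1 k) //= /W eqxx.
rewrite (eq_bigr (fun j => B / S j (i j))); last by move=> j /negbTE ->.
rewrite big_split /= prodfV.
have -> : \prod_(j < r | j != k) B = B ^+ r.-1.
  by rewrite (eq_bigl (fun j => j \in predC1 k)) // prodr_const cardC1 card_ord.
rewrite -/(P i).
have Pnz : P i != 0 by rewrite /P prodf_seq_neq0; apply/allP => l _; apply/implyP => _; rewrite gt_eqF.
have Bnz : B ^+ r.-1 != 0 by rewrite expf_neq0 // gt_eqF.
by field; rewrite Pnz Bnz.
Qed.

Lemma core : B ^+ r <= max_s A k.
Proof.
have H1 : r%:R * B <= \sum_j \sum_i a i * W j i * y j (i j) ^+ r.
  rewrite exchange_big /= /B mulr_sumr; apply: ler_sum => i _; exact: step1.
have Tk : \sum_i a i * W k i * y k (i k) ^+ r <= max_s A k / B ^+ r.-1.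
  have -> : \sum_i a i * W k i * y k (i k) ^+ r =
      (\sum_i a i * P i * y k (i k) ^+ r) / B ^+ r.-1.
    rewrite mulr_suml; apply: eq_bigr => i _; rewrite /W eqxx; ring.
  apply: ler_wpM2r; first by rewrite invr_ge0 exprn_ge0 // ltW.
  rewrite (partition_big (fun i : midx n => i k) xpredT) //=.
  have inner (s : 'I_(n k)) : \sum_(i : midx n | true && (i k == s)) a i * P i * y k (i k) ^+ r =
      bound_ks A s * y k s ^+ r.
    by rewrite /bound_ks mulr_suml; apply: eq_big => // i /eqP ->.
  under eq_bigr => s _ do rewrite inner.
  apply: (@le_trans _ _ (\sum_s max_s A k * y k s ^+ r)).
    apply: ler_sum => s _; apply: ler_wpM2r; first by rewrite exprn_ge0.
    exact: max_s_ub.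
  by rewrite -mulr_sumr y1 mulr1.
have Tj : forall j, j != k -> \sum_i a i * W j i * y j (i j) ^+ r <= B.
  move=> j hj.
  under eq_bigr => i _ do rewrite /W (negbTE hj).
  rewrite (partition_big (fun i : midx n => i j) xpredT) //=.
  rewrite -[B in _ <= B]mulr1 -(y1 j) mulr_sumr; apply: ler_sum => t _.
  have -> : \sum_(i : midx n | true && (i j == t)) a i * (B / S j (i j)) * y j (i j) ^+ r
      = (B / S j t * y j t ^+ r) * S j t.
    transitivity (\sum_(i : midx n | i j == t) a i * (B / S j t * y j t ^+ r)).
      by apply: eq_big => // i /= /eqP ->; rewrite !mulrA.
    by rewrite -mulr_suml mulrC.
  have [S0|Snz] := eqVneq (S j t) 0.
    by rewrite S0 mulr0 mulr_ge0 // ?exprn_ge0 // ltW.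
  by rewrite le_eqVlt; apply/orP; left; apply/eqP; field.
rewrite (bigD1 k) //= in H1.
have H2 : \sum_(j < r | j != k) \sum_i a i * W j i * y j (i j) ^+ r <= r.-1%:R * B.
  apply: (@le_trans _ _ (\sum_(j < r | j != k) B)); first exact: ler_sum.
  rewrite (eq_bigl (fun j => j \in predC1 k)) // sumr_const cardC1 card_ord.
  by rewrite mulr_natl.
have H3 : B <= max_s A k / B ^+ r.-1.
  have := le_trans H1 (lerD Tk H2).
  have er : (r%:R : R) = r.-1%:R + 1 by rewrite natr1 prednK.
  by rewrite er mulrDl mul1r [X in X <= _]addrC lerD2r.
rewrite ler_pdivlMr ?exprn_gt0 // in H3.
have er : B ^+ r = B * B ^+ r.-1 by rewrite -exprS prednK.
by rewrite er.
Qed.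
End Core2.

Lemma min_ord_ge (R : realType) (r : nat) (hr : (0 < r)%N) (F : 'I_r -> R) (e : R) :
  (forall k, e <= F k) -> e <= min_ord F.
Proof.
move=> h; rewrite /min_ord; apply: (big_ind (fun v => e <= v)).
- apply: le_trans (h (Ordinal hr)) _.
  by rewrite (bigD1 (Ordinal hr)) //= le_max lexx.
- by move=> a b ha hb; rewrite le_min ha hb.
- by move=> k _; exact: h.
Qed.

Theorem theorem17 (R : realType) (r : nat) (n : 'I_r -> nat)
  (hr : (0 < r)%N) (hn : forall j, (0 < n j)%N) (A : rmatrix R n) :
  spec_norm A ^+ r <= min_ord (fun k : 'I_r => max_s A k).
Proof.
set Mm := min_ord _.
have Mm0 : 0 <= Mm by apply: min_ord_ge => // k; exact: max_s_ge0.
have key : forall x : forall k : 'I_r, 'I_(n k) -> R[i],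
    (forall k, lrpow r (x k) = 1) -> nc (rform A x) ^+ r <= Mm.
  move=> x hx.
  pose y := fun j t => nc (x j t).
  have y0 : forall j t, 0 <= y j t by move=> j t; exact: nc_ge0.
  have y1 : forall j, \sum_t y j t ^+ r = 1 by move=> j; exact: hx.
  pose B := \sum_(i : midx n) nc (A i) * \prod_j y j (i j).
  have le1 : nc (rform A x) <= B.
    rewrite /rform; apply: le_trans (nc_sum _) _; apply: ler_sum => i _.
    rewrite ComplexField.Normc.normcM nc_prod.
    by under eq_bigr do rewrite nc_conj.
  have B0 : 0 <= B by apply: sumr_ge0 => i _; rewrite mulr_ge0 ?nc_ge0 // prodr_ge0.
  apply: (@le_trans _ _ (B ^+ r)).
    by rewrite (ler_pXn2r hr) ?nnegrE ?nc_ge0.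
  apply: min_ord_ge => // k.
  have [Bz|Bnz] := eqVneq B 0.
    by rewrite Bz expr0n (negbTE (lt0n_neq0 hr)) max_s_ge0.
  apply: (@core R r n hr A y y0 y1 k); by rewrite lt_def Bnz B0.
rewrite /spec_norm.
set T := (X in sup X).
have [Tn0|T0] := pselect (T !=set0)%classic; last first.
  have -> : T = set0%classic.
    by apply/seteqP; split=> e // he; apply: T0; exists e.
  by rewrite sup0 expr0n (negbTE (lt0n_neq0 hr)).
pose m := Mm `^ (r%:R^-1).
have hm : m ^+ r = Mm.
  rewrite -powR_mulrn ?powR_ge0 // -powRrM mulVf ?powRr1 //.
  by rewrite pnatr_eq0 -lt0n.
have ub : ubound T m.
  move=> e [x hx <-]; have := key x hx.
  by rewrite -hm (ler_pXn2r hr) ?nnegrE ?nc_ge0 ?powR_ge0.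
have sm : sup T <= m by apply: ge_sup.
have s0 : 0 <= sup T.
  case: Tn0 => e Te; apply: le_trans (ub_le_sup _ Te); last by exists m.
  by case: Te => x _ <-; exact: nc_ge0.
by rewrite -hm (ler_pXn2r hr) ?nnegrE ?powR_ge0.
Qed.
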